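(* Let $S$ be a hyperstonean space, let $N$ be the family of meager subsets of $S$ and $M$ the family of symmetric differences of open sets and meager sets. Then $(S,M,N)$ is a compact strictly localizable enhanced measurable space. Moreover, every continuous open map $f:S\to S'$ between hyperstonean spaces satisfies $f^*M'\subset M$ and $f^*N'\subset N$, so this construction defines a functor $\mathrm{TM}:\mathsf{HStonean}\to\mathsf{CSLEMS}$.
   Context: A hyperstonean space is a compact Hausdorff totally disconnected space in which the closure of every open set is open and such that for every nonempty open $U$ there is a map $\nu$ from open sets to $[0,\infty)$ with $\nu(\emptyset)=0$, $\nu(U_1)+\nu(U_2)=\nu(U_1\cup U_2)+\nu(U_1\cap U_2)$, monotone, preserving suprema of directed families, with $\nu(\overline V)=\nu(V)$ for all open $V$, and $\nu(U)\neq0$. $\mathsf{HStonean}$: hyperstonean spaces and continuous open maps. Enhanced measurable space $(X,M,N)$: $M$ a $\sigma$-algebra, $N\subset M$ closed under subsets and countable unions; morphisms in $\mathsf{EMS}$: classes of premaps $f:X_0\to Y$ ($X\setminus X_0\in N_X$, $f^*M_Y\subset M_X$, $f^*N_Y\subset N_X$) modulo $f^*m\oplus g^*m\in N_X$ for all $m\in M_Y$. Finite measure: countably additive $\mu:M\to\mathbb{C}$ vanishing on $N$; faithful if vanishing on all measurable subsets of $m$ forces $m\in N$; $\sigma$-finite: admits a faithful finite measure. Strictly localizable: partition $\{X_i\}\subset M$ with $\sigma$-finite induced subspaces such that $A\in M$ (resp. $N$) iff $A\cap X_i\in M$ (resp. $N$) for all $i$. Compact: there is a compact class $K\subset M$ (subfamilies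 with finite intersection property have nonempty intersection) with every $m\in M\setminus N$ containing some $k\in K\setminus N$. $\mathsf{CSLEMS}$: full subcategory of $\mathsf{EMS}$ on compact strictly localizable spaces. *)

(* Defs.v *)
From HB Require Import structures.
From mathcomp Require Import all_boot all_order all_algebra.
From mathcomp Require Import all_classical all_reals.
From mathcomp Require Import topology normedtype sequences measure.
Set Implicit Arguments. Unset Strict Implicit. Unset Printing Implicit Defensive.
Import Order.TTheory GRing.Theory Num.Theory numFieldNormedType.Exports.
Local Open Scope classical_set_scope.
Local Open Scope ring_scope.

Definition directed_family (X : Type) (D : set (set X)) :=
  D !=set0 /\ forall A B, D A -> D B -> exists2 C, D C & A `|` B `<=` C.

Definition normal_open_measure (R : realType) (T : topologicalType)
    (nu : set T -> R) :=
  [/\ nu set0 = 0 /\ (forall U, open U -> 0 <= nu U),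
      (forall U1 U2, open U1 -> open U2 ->
          nu U1 + nu U2 = nu (U1 `|` U2) + nu (U1 `&` U2)),
      (forall U1 U2, open U1 -> open U2 -> U1 `<=` U2 -> nu U1 <= nu U2),
      (forall D : set (set T), D `<=` open -> directed_family D ->
          nu (\bigcup_(A in D) A) = sup [set nu A | A in D]) &
      (forall V, open V -> nu (closure V) = nu V)].

Definition hyperstonean (R : realType) (T : topologicalType) :=
  [/\ compact [set: T],
      hausdorff_space T,
      totally_disconnected [set: T],
      (forall U : set T, open U -> open (closure U)) &
      (forall U : set T, open U -> U !=set0 ->
          exists nu : set T -> R, normal_open_measure nu /\ nu U != 0)].

Definition open_map (T T' : topologicalType) (f : T -> T') :=
  forall U : set T, open U -> open (f @` U).

Definition nowhere_dense (T : topologicalType) (A : set T) :=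
  (closure A)° = set0.

Definition meager (T : topologicalType) (A : set T) :=
  exists F : (set T)^nat, (forall n, nowhere_dense (F n)) /\ A = \bigcup_n F n.

Definition symdiff (X : Type) (A B : set X) := (A `\` B) `|` (B `\` A).

Definition TM_N (T : topologicalType) : set (set T) := [set A | meager A].

Definition TM_M (T : topologicalType) : set (set T) :=
  [set A | exists U B, [/\ open U, meager B & A = symdiff U B]].

Definition enhanced_measurable (X : Type) (M N : set (set X)) :=
  [/\ sigma_algebra [set: X] M,
      N `<=` M,
      (forall A B, N A -> B `<=` A -> N B) &
      (forall F : (set X)^nat, (forall n, N (F n)) -> N (\bigcup_n F n))].

Definition countably_additive_on (R : realType) (X : Type)
    (M : set (set X)) (Y : set X) (mu : set X -> R) :=
  forall F : (set X)^nat,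
    (forall n, M (F n) /\ F n `<=` Y) -> trivIset setT F ->
    series (fun n => mu (F n)) @ \oo --> mu (\bigcup_n F n).

(* A finite (complex-valued) measure on the induced subspace on Y of (X,M,N):
   measurable sets of the subspace are the A in M with A `<=` Y, negligible
   sets those A in N with A `<=` Y.  A complex number is represented by its
   real and imaginary parts (mu_re, mu_im); countable additivity of a complex
   series is countable additivity of both parts. *)
Definition finite_measure_on (R : realType) (X : Type) (M N : set (set X))
    (Y : set X) (mu_re mu_im : set X -> R) :=
  [/\ countably_additive_on M Y mu_re,
      countably_additive_on M Y mu_im &
      (forall A, N A -> A `<=` Y -> mu_re A = 0 /\ mu_im A = 0)].

Definition faithful_on (R : realType) (X : Type) (M N : set (set X))
    (Y : set X) (mu_re mu_im : set X -> R) :=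
  forall m, M m -> m `<=` Y ->
    (forall A, M A -> A `<=` m -> mu_re A = 0 /\ mu_im A = 0) -> N m.

(* The induced subspace on Y is sigma-finite: it admits a faithful finite
   measure. *)
Definition sigma_finite_on (R : realType) (X : Type) (M N : set (set X))
    (Y : set X) :=
  exists mu_re mu_im : set X -> R,
    finite_measure_on M N Y mu_re mu_im /\ faithful_on M N Y mu_re mu_im.

Definition strictly_localizable (R : realType) (X : Type)
    (M N : set (set X)) :=
  exists (I : Type) (P : I -> set X),
    [/\ (forall i, M (P i)) /\ (forall i j, i <> j -> P i `&` P j = set0),
        \bigcup_i P i = [set: X],
        (forall i, sigma_finite_on R M N (P i)),
        (forall A, M A <-> forall i, M (A `&` P i)) &
        (forall A, N A <-> forall i, N (A `&` P i))].

Definition finite_intersection_property (X : Type) (F : set (set X)) :=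
  forall G, G `<=` F -> finite_set G -> G !=set0 ->
    (\bigcap_(A in G) A) !=set0.

Definition compact_class (X : Type) (K : set (set X)) :=
  forall F, F `<=` K -> F !=set0 -> finite_intersection_property F ->
    (\bigcap_(A in F) A) !=set0.

Definition compact_EMS (X : Type) (M N : set (set X)) :=
  exists K : set (set X),
    [/\ K `<=` M, compact_class K &
        forall m, M m -> ~ N m -> exists2 k, K k /\ ~ N k & k `<=` m].

Definition compact_strictly_localizable_EMS (R : realType) (X : Type)
    (M N : set (set X)) :=
  [/\ enhanced_measurable M N, compact_EMS M N & strictly_localizable R M N].

Arguments TM_M : clear implicits.
Arguments TM_N : clear implicits.

(* Main.v *)
Require Import Defs.
From HB Require Import structures.
From mathcomp Require Import all_boot all_order all_algebra.
From mathcomp Require Import all_classical all_reals.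
From mathcomp Require Import topology normedtype sequences measure.
From Stdlib Require Import Classical.
From mathcomp Require Import ring lra.
From mathcomp Require Import finmap.
Set Implicit Arguments. Unset Strict Implicit. Unset Printing Implicit Defensive.
Import Order.TTheory GRing.Theory Num.Theory numFieldNormedType.Exports.
Local Open Scope classical_set_scope.
Local Open Scope ring_scope.

Section Topo.
Context {T : topologicalType}.

Lemma nd_sub (A B : set T) : B `<=` A -> nowhere_dense A -> nowhere_dense B.
Proof.
move=> BA; rewrite /nowhere_dense => h; apply/seteqP; split=> // x.
by rewrite -h; apply: interiorS; apply: closureS.
Qed.

Lemma nd_set0 : nowhere_dense (@set0 T).
Proof.
rewrite /nowhere_dense; apply/seteqP; split=> // x /interior_subset cx.
by have [y []] := cx setT filterT.
Qed.

Lemma open_sub_interior (A B : set T) : open A -> A `<=` B -> A `<=` B°.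
Proof.
by move=> oA AB x Ax; apply: (interiorS AB); rewrite (proj1 (interior_id A) oA).
Qed.

Lemma open_nd0 (U : set T) : open U -> nowhere_dense U -> U = set0.
Proof.
move=> oU h; apply/seteqP; split=> // x Ux; rewrite -h.
have : (U°) x by rewrite (proj1 (interior_id U) oU).
by apply: interiorS; apply: subset_closure.
Qed.

Lemma meager_nd (A : set T) : nowhere_dense A -> meager A.
Proof.
move=> h; exists (fun=> A); split=> //; apply/seteqP; split=> x.
  by move=> Ax; exists 0%N.
by case.
Qed.

Lemma symdiffK1 (U B : set T) : symdiff (symdiff U B) U = B.
Proof.
apply/seteqP; split=> x; rewrite /symdiff /=;
have := classic (U x); have := classic (B x); tauto.
Qed.

Lemma symdiffK2 (A U : set T) : A = symdiff U (symdiff A U).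
Proof.
apply/seteqP; split=> x; rewrite /symdiff /=;
have := classic (U x); have := classic (A x); tauto.
Qed.

Lemma TM_ME (A : set T) : TM_M T A <-> exists U, open U /\ meager (symdiff A U).
Proof.
split.
  by move=> [U [B [oU mB ->]]]; exists U; rewrite symdiffK1.
by move=> [U [oU mB]]; exists U, (symdiff A U); split=> //; exact: symdiffK2.
Qed.

End Topo.

Section Functor.
Context {S S' : topologicalType} (f : S -> S').
Hypotheses (fc : continuous f) (fo : open_map f).

Lemma closure_preim (F : set S') : closure (f @^-1` F) `<=` f @^-1` closure F.
Proof.
move=> x cx B NB; have := cx (f @^-1` B) (fc NB).
by move=> [y [Fy By]]; exists (f y).
Qed.

Lemma nd_preim (F : set S') : nowhere_dense F -> nowhere_dense (f @^-1` F).
Proof.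
move=> h; apply/seteqP; split=> // x Ox.
set O := (closure (f @^-1` F))°.
have oO : open O by exact: open_interior.
have oFO : open (f @` O) := fo oO.
have sub : f @` O `<=` closure F.
  by move=> _ [y Oy <-]; apply: closure_preim; exact: interior_subset.
have : (f @` O) `<=` (closure F)° by exact: open_sub_interior.
by move=> /(_ (f x) (ex_intro2 _ _ x Ox erefl)); rewrite h.
Qed.

Lemma meager_preim (F : set S') : meager F -> meager (f @^-1` F).
Proof.
move=> [G [ndG ->]]; exists (fun n => f @^-1` G n); split.
  by move=> n; apply: nd_preim.
by rewrite preimage_bigcup.
Qed.

Lemma functor_part :
  (forall m, TM_M S' m -> TM_M S (f @^-1` m)) /\
  (forall n, TM_N S' n -> TM_N S (f @^-1` n)).
Proof.
split; last by move=> n; exact: meager_preim.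
move=> m [U [B [oU mB ->]]]; exists (f @^-1` U), (f @^-1` B); split.
- by move: fc => /continuousP; apply.
- exact: meager_preim.
- by apply/seteqP; split=> x; rewrite /symdiff /=.
Qed.

End Functor.

Section Hyper.
Context {R : realType} {T : topologicalType} (hT : hyperstonean R T).

Lemma hclo (U : set T) : open U -> open (closure U).
Proof. by case: hT => _ _ _ h _; exact: h. Qed.

Lemma zero_dim (O : set T) x : open O -> O x ->
  exists k, [/\ open k, closed k, k x & k `<=` O].
Proof.
move=> oO Ox; case: hT => cT hsT _ _ _.
have reg := @compact_regular T x setT hsT cT filterT.
have : filter_from (nbhs x) closure O.
  by apply: reg; rewrite nbhsE /=; exists O.
move=> [W NW cWO]; exists (closure W°); split.
- exact/hclo/open_interior.
- exact: closed_closure.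
- by apply: subset_closure.
- by apply: subset_trans cWO; apply: closureS; exact: interior_subset.
Qed.

Section Normal.
Variable nu : set T -> R.
Hypothesis hnu : normal_open_measure nu.

Lemma nu0 : nu set0 = 0. Proof. by case: hnu => -[]. Qed.
Lemma nuge0 U : open U -> 0 <= nu U. Proof. by case: hnu => -[_ h] _ _ _ _; exact: h. Qed.
Lemma numod U1 U2 : open U1 -> open U2 ->
  nu U1 + nu U2 = nu (U1 `|` U2) + nu (U1 `&` U2).
Proof. by case: hnu => _ h _ _ _; exact: h. Qed.
Lemma numono U1 U2 : open U1 -> open U2 -> U1 `<=` U2 -> nu U1 <= nu U2.
Proof. by case: hnu => _ _ h _ _; exact: h. Qed.
Lemma nusup (D : set (set T)) : D `<=` open -> directed_family D ->
  nu (\bigcup_(A in D) A) = sup [set nu A | A in D].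
Proof. by case: hnu => _ _ _ h _; exact: h. Qed.
Lemma nucl V : open V -> nu (closure V) = nu V.
Proof. by case: hnu => _ _ _ _ h; exact: h. Qed.

Lemma nu_add_disj U V : open U -> open V -> U `&` V = set0 ->
  nu (U `|` V) = nu U + nu V.
Proof. by move=> oU oV UV; rewrite numod // UV nu0 addr0. Qed.

Lemma nu_subadd U V : open U -> open V -> nu (U `|` V) <= nu U + nu V.
Proof.
move=> oU oV; rewrite numod //; have := nuge0 (openI oU oV); lra.
Qed.

Lemma nu_nd_small (F : set T) eps : nowhere_dense F -> 0 < eps ->
  exists G, [/\ open G, closed G, F `<=` G & nu G < eps].
Proof.
move=> ndF eps0.
set O := ~` closure F.
have oO : open O by apply: closed_openC; exact: closed_closure.
have clO : closure O = setT.
  apply/seteqP; split=> // x _ B NB; apply: contrapT => nOB.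
  have : (closure F)° x.
    apply: filterS NB => y By; apply: contrapT => ncy.
    by apply: nOB; exists y.
  by rewrite ndF.
have nuO : nu O = nu setT by rewrite -(nucl oO) clO.
set D := [set C | [/\ open C, closed C & C `<=` O]].
have DO : D `<=` open by move=> C [].
have dirD : directed_family D.
  split; first by exists set0; split=> //; [exact: open0|exact: closed0].
  move=> A B [oA cA AO] [oB cB BO]; exists (A `|` B) => //.
  split; [exact: openU|exact: closedU|by move=> y [/AO|/BO]].
have UD : \bigcup_(A in D) A = O.
  apply/seteqP; split; first by move=> y [C [_ _ CO]]; exact: CO.
  move=> y Oy; have [k [ok ck ky kO]] := zero_dim oO Oy.
  by exists k.
have := nusup DO dirD; rewrite UD nuO => supE.
have : nu setT - eps < sup [set nu A | A in D] by rewrite -supE; lra.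
move=> /sup_gt [].
  by exists (nu set0), set0 => //; split=> //; [exact: open0|exact: closed0].
move=> _ [C [oC cC CO] <-] ltC.
exists (~` C); split.
- exact: closed_openC.
- exact: open_closedC.
- move=> y Fy Cy; have := CO y Cy; rewrite /O /=; apply.
  exact: subset_closure.
- have := numod oC (closed_openC cC).
  rewrite setUv setICr nu0 addr0; lra.
Qed.

End Normal.

Lemma nd_bigcup (F : (set T)^nat) : (forall n, nowhere_dense (F n)) ->
  nowhere_dense (\bigcup_n F n).
Proof.
move=> ndF; apply/seteqP; split=> // x Vx.
set V := (closure (\bigcup_n F n))° in Vx.
have oV : open V by exact: open_interior.
have [nu [hnu nuV]] : exists nu : set T -> R, normal_open_measure nu /\ nu V != 0.
  by case: hT => _ _ _ _ h; apply: h => //; exists x.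
have nuVp : 0 < nu V by rewrite lt0r nuV (nuge0 hnu).
set eps := nu V / 2.
have eps0 : 0 < eps by rewrite /eps divr_gt0.
have : forall n, exists G, [/\ open G, closed G, F n `<=` G &
    nu G < eps / 2 ^+ n.+1].
  move=> n; apply: nu_nd_small => //; exact: divr_gt0 (exprn_gt0 _ _).
move=> /choice [G hG].
set U := fun n => \bigcup_(k in [set k | (k < n)%N]) G k.
have oG k : open (G k) by case: (hG k).
have oU n : open (U n) by apply: bigcup_open => k _; exact: oG.
have bound n : nu (U n) <= eps - eps / 2 ^+ n.
  elim: n => [|n IH].
    have -> : U 0%N = set0 by apply/seteqP; split=> // y [].
    by rewrite (nu0 hnu) expr0 divr1 subrr.
  have -> : U n.+1 = U n `|` G n.
    apply/seteqP; split=> y.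
      move=> [k /= kn Gky]; have := kn; rewrite ltnS leq_eqVlt => /orP[/eqP kE|kn'].
        by right; rewrite -kE.
      by left; exists k.
    move=> [[k /= kn Gky]|Gny]; first by exists k => //=; apply: ltnW.
    by exists n => //=.
  have e2 : eps / 2 ^+ n = 2 * (eps / 2 ^+ n.+1).
    by rewrite exprS; field; apply: expf_neq0; rewrite pnatr_eq0.
  have := nu_subadd hnu (oU n) (oG n); case: (hG n) => _ _ _ ltn.
  rewrite e2 in IH; lra.
set Gall := \bigcup_n G n.
have oGall : open Gall by apply: bigcup_open => k _; exact: oG.
have DU : \bigcup_(A in range U) A = Gall.
  apply/seteqP; split.
    by move=> y [_ [n _ <-]] [k _ Gky]; exists k.
  move=> y [k _ Gky]; exists (U k.+1); first by exists k.+1.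
  by exists k => //=.
have dir : directed_family (range U).
  split; first by exists (U 0%N), 0%N.
  move=> _ _ [n _ <-] [m _ <-]; exists (U (maxn n m)); first by exists (maxn n m).
  move=> y [] [k /= kn Gky]; exists k => //=.
    by apply: leq_trans kn (leq_maxl _ _).
  by apply: leq_trans kn (leq_maxr _ _).
have rUo : range U `<=` open by move=> _ [n _ <-]; exact: oU.
have := nusup hnu rUo dir.
rewrite DU => nuG.
have nuGle : nu Gall <= eps.
  rewrite nuG; apply: ge_sup; first by exists (nu (U 0%N)), (U 0%N) => //; exists 0%N.
  move=> _ [_ [n _ <-] <-]; apply: le_trans (bound n) _.
  rewrite lerBlDr lerDl; apply: divr_ge0; [exact: ltW|exact: exprn_ge0].
have : nu V <= nu Gall.
  rewrite -(nucl hnu oGall); apply: (numono hnu oV (hclo oGall)).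
  apply: subset_trans (@interior_subset _ _) _; apply: closureS.
  by move=> y [n _ Fny]; exists n => //; case: (hG n) => _ _ /(_ y Fny).
rewrite /eps in nuGle; lra.
Qed.

End Hyper.

Section Hyper2.
Context {R : realType} {T : topologicalType} (hT : hyperstonean R T).

Lemma meagerE (A : set T) : meager A <-> nowhere_dense A.
Proof.
split; last exact: meager_nd.
by move=> [F [ndF ->]]; apply: (nd_bigcup hT).
Qed.

Lemma nd_setU (A B : set T) : nowhere_dense A -> nowhere_dense B ->
  nowhere_dense (A `|` B).
Proof.
move=> nA nB.
have -> : A `|` B = \bigcup_n (if n is 0%N then A else B).
  apply/seteqP; split=> x.
    by move=> [Ax|Bx]; [exists 0%N|exists 1%N].
  by move=> [[|n] _ /=]; [left|right].
by apply: (nd_bigcup hT) => -[|n].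
Qed.

Lemma TM_MnE (A : set T) :
  TM_M T A <-> exists U, open U /\ nowhere_dense (symdiff A U).
Proof.
rewrite TM_ME; split=> -[U [oU h]]; exists U; split => //; exact/meagerE.
Qed.

Lemma nd_bd (U : set T) : open U -> nowhere_dense (closure U `\` U).
Proof.
move=> oU; apply/seteqP; split=> // y yi.
have cy : closure (closure U `\` U) y := interior_subset yi.
have cUy : closure U y.
  have -> : closure U = closure (closure U) by apply/closure_id/closed_closure.
  by apply: (closureS _ cy) => w [].
have [z [Uz Bz]] := cUy _ yi.
have [w [[_ nUw] Uw]] := Bz U (open_nbhs_nbhs (conj oU Uz)).
by case: nUw.
Qed.

Lemma TM_EMS : enhanced_measurable (TM_M T) (TM_N T).
Proof.
split.
- split.
  + apply/TM_MnE; exists set0; split; first exact: open0.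
    have -> : symdiff (@set0 T) set0 = set0.
      by apply/seteqP; split=> x; [move=> [[]|[]]|move=> []].
    exact: nd_set0.
  + move=> A /TM_MnE [U [oU ndA]]; apply/TM_MnE.
    exists (~` closure U); split; first exact/closed_openC/closed_closure.
    apply: nd_sub (nd_setU ndA (nd_bd oU)).
    move=> x; rewrite /symdiff /=.
    have := @subset_closure _ U x.
    have := classic (A x); have := classic (U x); have := classic (closure U x).
    tauto.
  + move=> A hA; apply/TM_MnE.
    have /choice [U hU] : forall n, exists U, open U /\ nowhere_dense (symdiff (A n) U).
      by move=> n; apply/TM_MnE.
    exists (\bigcup_n U n); split; first by apply: bigcup_open => n _; case: (hU n).
    apply: nd_sub (nd_bigcup hT (fun n => proj2 (hU n))).
    move=> x [[[n _ Anx] nU]|[[n _ Unx] nA]].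
      exists n => //; left; split => // Ux; apply: nU; by exists n.
    exists n => //; right; split => // Ax; apply: nA; by exists n.
- move=> A mA; apply/TM_MnE; exists set0; split; first exact: open0.
  apply: nd_sub (proj1 (meagerE A) mA).
  by move=> x [[]|[]].
- move=> A B /meagerE nA BA; apply/meagerE; exact: nd_sub nA.
- move=> F hF; apply/meagerE; apply: (nd_bigcup hT) => n; apply/meagerE; exact: hF.
Qed.

End Hyper2.

Section Hyper3.
Context {R : realType} {T : topologicalType} (hT : hyperstonean R T).

Lemma clopen_compact_class : compact_class [set k : set T | open k /\ closed k].
Proof.
move=> F FK [k0 Fk0] fip.
have [p0 _] : (\bigcap_(A in [set k0]) A) !=set0.
  apply: fip; [by move=> A ->|exact: finite_set1|by exists k0].
have finIF : finI F id.
  move=> D' sD'; case: (pselect ([set i : set T | i \in D'] !=set0)) => [ne|e].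
    have sub : [set i : set T | i \in D'] `<=` F by move=> A /= /sD'; rewrite in_setE.
    exact: (fip _ sub (finite_fset D') ne).
  exists p0 => A /= AD'; case: e; by exists A.
have [cT _ _ _ _] := hT.
have PF := finI_filter finIF.
have [|p [_ clp]] := cT _ PF; first exact: filterT.
exists p => k Fk.
have ck : closed k by case: (FK k Fk).
rewrite (closure_id k).1 //.
move=> B NB; apply: clp NB.
by exists k => //; exact: finI_from1.
Qed.

Lemma symdiffxx (A : set T) : symdiff A A = set0.
Proof. by apply/seteqP; split=> x; [move=> [[]|[]]|move=> []]. Qed.

Lemma TM_compact : compact_EMS (TM_M T) (TM_N T).
Proof.
exists [set k | open k /\ closed k]; split.
- move=> k [ok ck]; apply/(TM_MnE hT); exists k; split => //.
  rewrite symdiffxx; exact: nd_set0.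
- exact: clopen_compact_class.
- move=> m /(TM_MnE hT) [U [oU ndB]] nm.
  set B := symdiff m U in ndB.
  have [x [Ux ncx]] : exists x, U x /\ ~ closure B x.
    apply: contrapT => hn.
    have UB : U `<=` closure B.
      by move=> x Ux; apply: contrapT => nc; apply: hn; exists x.
    have := open_sub_interior oU UB; rewrite ndB => U0.
    apply: nm; apply/(meagerE hT); apply: nd_sub ndB => y my.
    left; split => // /U0 [].
  have oO : open (U `&` ~` closure B).
    by apply: openI oU _; apply: closed_openC; exact: closed_closure.
  have [k [ok ck kx kO]] := zero_dim hT oO (conj Ux ncx).
  exists k; first split.
  + by [].
  + move=> /(meagerE hT) ndk; have := open_nd0 ok ndk.
    by move=> k0; rewrite k0 in kx.
  + move=> y ky; have [Uy ncy] := kO y ky.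
    apply: contrapT => nmy; apply: ncy; apply: subset_closure.
    by right; split.
Qed.

End Hyper3.

Lemma symdiff_trans {T : Type} (A B C : set T) :
  symdiff A C `<=` symdiff A B `|` symdiff B C.
Proof.
move=> x; rewrite /symdiff /=.
have := classic (A x); have := classic (B x); have := classic (C x); tauto.
Qed.

Lemma symdiffC {T : Type} (A B : set T) : symdiff A B = symdiff B A.
Proof. by rewrite /symdiff setUC. Qed.

Section Hyper4.
Context {R : realType} {T : topologicalType} (hT : hyperstonean R T).

Definition regU (A : set T) : set T :=
  match pselect (exists U, open U /\ nowhere_dense (symdiff A U)) with
  | left h => closure (proj1_sig (cid h))
  | right _ => set0
  end.

Lemma regU_spec A : TM_M T A ->
  [/\ open (regU A), closed (regU A) & nowhere_dense (symdiff A (regU A))].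
Proof.
move=> /(TM_MnE hT) ex; rewrite /regU; case: pselect => [h|//].
case: (cid h) => U [oU ndU] /=; split.
- exact: (hclo hT oU).
- exact: closed_closure.
- apply: nd_sub (nd_setU hT ndU (nd_bd oU)).
  move=> x /(symdiff_trans U) [l|r]; first by left.
  right; case: r => [[Ux ncx]|//].
  by case: ncx; exact: subset_closure.
Qed.

Lemma cl_unique (U V : set T) : open U -> open V ->
  nowhere_dense (symdiff U V) -> closure U = closure V.
Proof.
have side : forall U V : set T, open U -> open V ->
    nowhere_dense (symdiff U V) -> closure U `<=` closure V.
  move=> U' V' oU oV nd.
  have oO : open (U' `&` ~` closure V').
    by apply: openI oU _; apply: closed_openC; exact: closed_closure.
  have O0 := open_nd0 oO (nd_sub (fun x '(conj Ux nc) => or_introl (conj Ux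
      (fun Vx => nc (subset_closure Vx)))) nd).
  have UV : U' `<=` closure V'.
    move=> x Ux; apply: contrapT => nc.
    by have : (U' `&` ~` closure V') x by []; rewrite O0.
  rewrite [X in _ `<=` X](closure_id _).1; last exact: closed_closure.
  exact: closureS.
move=> oU oV nd; apply/seteqP; split; first exact: side.
by apply: side => //; rewrite symdiffC.
Qed.

End Hyper4.

Section Hyper5.
Context {R : realType} {T : topologicalType} (hT : hyperstonean R T).

Definition good (C : set T) := exists nu : set T -> R, normal_open_measure nu /\
  (forall W, open W -> W `<=` C -> W !=set0 -> 0 < nu W).

Lemma good_inside V : open V -> V !=set0 ->
  exists C, [/\ open C, closed C, C !=set0, C `<=` closure V & good C].
Proof.
move=> oV [x Vx].
have [nu [hnu nuV]] : exists nu : set T -> R, normal_open_measure nu /\ nu V != 0.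
  by case: hT => _ _ _ _ h; apply: h => //; exists x.
have nuVp : 0 < nu V by rewrite lt0r nuV (nuge0 hnu).
set D := [set W | open W /\ nu W = 0].
have DO : D `<=` open by move=> W [].
have dir : directed_family D.
  split; first by exists set0; split; [exact: open0|exact: (nu0 hnu)].
  move=> A B [oA nA] [oB nB]; exists (A `|` B) => //; split; first exact: openU.
  have := nu_subadd hnu oA oB; have := nuge0 hnu (openU oA oB); lra.
set Z := \bigcup_(W in D) W.
have oZ : open Z by apply: bigcup_open => W [].
have nuZ : nu Z = 0.
  rewrite /Z (nusup hnu DO dir).
  have -> : [set nu A | A in D] = [set 0].
    apply/seteqP; split; first by move=> _ [A [_ h] <-].
    move=> y /= ->; exists set0; last exact: (nu0 hnu).
    split; [exact: open0|exact: (nu0 hnu)].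
  exact: sup1.
exists (closure V `&` ~` closure Z); split.
- apply: openI (hclo hT oV) _; apply: closed_openC; exact: closed_closure.
- apply: closedI; first exact: closed_closure.
  apply: open_closedC; exact: (hclo hT oZ).
- apply: contrapT => ne.
  have sub : closure V `<=` closure Z.
    move=> y cy; apply: contrapT => ncy; apply: ne; by exists y.
  have h1 := numono hnu oV (hclo hT oV) (@subset_closure _ V).
  have h2 := numono hnu (hclo hT oV) (hclo hT oZ) sub.
  have h3 := nucl hnu oZ.
  lra.
- by move=> y [].
- exists nu; split => // W oW WC [w Ww].
  have := nuge0 hnu oW; rewrite le_eqVlt => /orP[/eqP W0|//].
  have Zw : Z w by exists W.
  by have [_ /(_ (subset_closure Zw))] := WC w Ww.
Qed.

Lemma nu_series (nu : set T -> R) (hnu : normal_open_measure nu)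
  (W : (set T)^nat) : (forall n, open (W n)) ->
  (forall n m, n <> m -> W n `&` W m = set0) ->
  series (fun n => nu (W n)) @ \oo --> nu (\bigcup_n W n).
Proof.
move=> oW dW.
set U := fun n => \bigcup_(k in [set k | (k < n)%N]) W k.
have oU n : open (U n) by apply: bigcup_open => k _; exact: oW.
have US n : U n.+1 = U n `|` W n.
  apply/seteqP; split=> y.
    move=> [k /= kn Wky]; have := kn; rewrite ltnS leq_eqVlt => /orP[/eqP kE|kn'].
      by right; rewrite -kE.
    by left; exists k.
  move=> [[k /= kn Wky]|Wny]; first by exists k => //=; apply: ltnW.
  by exists n => //=.
have Ueq n : series (fun n => nu (W n)) n = nu (U n).
  elim: n => [|n IH].
    have -> : U 0%N = set0 by apply/seteqP; split=> // y [].
    by rewrite /series /= big_geq // (nu0 hnu).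
  move: IH; rewrite /series /= big_nat_recr //= => ->.
  rewrite US (nu_add_disj hnu (oU n) (oW n)) //.
  apply/seteqP; split=> // y [[k /= kn Wky] Wny].
  have kn' : k <> n by move=> e; rewrite e ltnn in kn.
  by have := dW _ _ kn'; move=> e; have : (W k `&` W n) y by []; rewrite e.
have -> : series (fun n => nu (W n)) = (fun n => nu (U n)) by apply/funext.
have -> : \bigcup_n W n = \bigcup_(A in range U) A.
  apply/seteqP; split.
    move=> y [k _ Wky]; exists (U k.+1); first by exists k.+1.
    by exists k => //=.
  by move=> y [_ [n _ <-]] [k _ Wky]; exists k.
have dir : directed_family (range U).
  split; first by exists (U 0%N), 0%N.
  move=> _ _ [n _ <-] [m _ <-]; exists (U (maxn n m)); first by exists (maxn n m).
  move=> y [] [k /= kn Gky]; exists k => //=.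
    by apply: leq_trans kn (leq_maxl _ _).
  by apply: leq_trans kn (leq_maxr _ _).
have rUo : range U `<=` open by move=> _ [n _ <-]; exact: oU.
rewrite (nusup hnu rUo dir).
have -> : [set nu A | A in range U] = range (fun n => nu (U n)).
  apply/seteqP; split; first by move=> _ [_ [n _ <-] <-]; exists n.
  by move=> _ [n _ <-]; exists (U n) => //; exists n.
apply: nondecreasing_cvgn.
  move=> n m nm; apply: (numono hnu (oU n) (oU m)).
  by move=> y [k /= kn Wky]; exists k => //=; apply: leq_trans kn nm.
have oUU : open (\bigcup_(A in range U) A) by apply: bigcup_open.
exists (nu (\bigcup_(A in range U) A)) => _ [n _ <-].
apply: (numono hnu (oU n) oUU).
by move=> y Uy; exists (U n) => //; exists n.
Qed.

End Hyper5.

Lemma series0 {R : realType} : series (fun _ : nat => (0 : R)) @ \oo --> (0 : R).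
Proof.
have -> : series (fun _ : nat => (0 : R)) = fun=> 0.
  by apply/funext => n; rewrite /series /= big1.
exact: cvg_cst.
Qed.

Section Hyper6.
Context {R : realType} {T : topologicalType} (hT : hyperstonean R T).

Lemma TM_MI (A B : set T) : TM_M T A -> TM_M T B -> TM_M T (A `&` B).
Proof.
move=> /(TM_MnE hT) [U [oU nA]] /(TM_MnE hT) [V [oV nB]].
apply/(TM_MnE hT); exists (U `&` V); split; first exact: openI.
apply: nd_sub (nd_setU hT nA nB) => x; rewrite /symdiff /=.
have := classic (A x); have := classic (B x); have := classic (U x);
have := classic (V x); tauto.
Qed.

Definition Pfam (Fam : set (set T)) :=
  (forall C, Fam C -> [/\ open C, closed C, C !=set0 & @good R T C]) /\
  (forall C C', Fam C -> Fam C' -> C <> C' -> C `&` C' = set0).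

Lemma exists_maxfam : exists Fam, Pfam Fam /\
  (forall V, open V -> V !=set0 -> exists C, Fam C /\ (C `&` V) !=set0).
Proof.
have [|Fam [PF maxF]] := @Zorn_bigcup (set T) Pfam.
  move=> F FP tot; split.
    by move=> C [X FX XC]; exact: (FP X FX).1 C XC.
  move=> C C' [X FX XC] [Y FY YC'] ne.
  case: (tot X Y FX FY) => [XY|YX].
    exact: (FP Y FY).2 C C' (XY C XC) YC' ne.
  exact: (FP X FX).2 C C' XC (YX C' YC') ne.
exists Fam; split => // V oV V0; apply: contrapT => hn.
have [C0 [oC0 cC0 [y C0y] C0V gC0]] := good_inside hT oV V0.
have disj : forall C, Fam C -> C `&` C0 = set0.
  move=> C FC; apply/seteqP; split=> // z [Cz C0z].
  have [oC _ _ _] := PF.1 C FC.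
  have [w [Vw Cw]] := C0V z C0z C (open_nbhs_nbhs (conj oC Cz)).
  by case: hn; exists C; split => //; exists w.
have nF : ~ Fam C0.
  move=> FC0; have := disj C0 FC0 => e.
  by have : (C0 `&` C0) y by []; rewrite e.
apply: (maxF (Fam `|` [set C0])).
  split; first by move=> C FC; left.
  by move=> sub; apply: nF; exact: (sub C0 (or_intror erefl)).
split.
  move=> C [FC|->]; first exact: PF.1.
  by split => //; exists y.
move=> C C' [FC|->] [FC'|->] ne.
- exact: PF.2.
- exact: disj.
- by rewrite setIC; exact: disj.
- by case: ne.
Qed.

Lemma piece_sf (C : set T) : open C -> closed C -> @good R T C ->
  sigma_finite_on R (TM_M T) (TM_N T) C.
Proof.
move=> oC cC [nu [hnu pos]].
have [[_ _ sU] NM _ _] := TM_EMS hT.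
exists (fun A => nu (C `&` regU A)), (fun=> 0); split; first split.
- move=> F hF tF.
  have MF n : TM_M T (F n) by case: (hF n).
  set K := fun n => regU (F n).
  have sK n := regU_spec hT (MF n).
  set W := fun n => C `&` K n.
  have oW n : open (W n) by have [oK _ _] := sK n; exact: openI.
  have dW : forall n m, n <> m -> W n `&` W m = set0.
    move=> n m nm; apply: (open_nd0 (openI (oW n) (oW m))).
    have [_ _ ndn] := sK n; have [_ _ ndm] := sK m.
    apply: nd_sub (nd_setU hT ndn ndm).
    move=> x [[Cx Knx] [_ Kmx]].
    case: (pselect (F n x)) => Fnx; last by left; right.
    case: (pselect (F m x)) => Fmx; last by right; right.
    by case: nm; apply: (tF n m I I); exists x.
  have := nu_series hnu oW dW.
  have -> : nu (C `&` regU (\bigcup_n F n)) = nu (\bigcup_n W n); last by [].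
  have MU : TM_M T (\bigcup_n F n) by apply: sU.
  have [oKU _ ndKU] := regU_spec hT MU.
  have oWU : open (\bigcup_n W n) by apply: bigcup_open.
  rewrite -(nucl hnu (openI oC oKU)) -(nucl hnu oWU); congr (nu _).
  apply: (cl_unique (openI oC oKU) oWU).
  have ndK : forall n, nowhere_dense (symdiff (F n) (K n)) by move=> n; case: (sK n).
  apply: nd_sub (nd_setU hT ndKU (nd_bigcup hT ndK)).
  move=> x [[[Cx KUx] nW]|[[n _ [Cx Knx]] nCKU]].
    case: (pselect ((\bigcup_n F n) x)) => [[n _ Fnx]|nF].
      right; exists n => //; left; split => // Knx.
      by apply: nW; exists n.
    by left; right.
  case: (pselect (F n x)) => Fnx.
    left; left; split; first by exists n.
    by move=> KUx; apply: nCKU.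
  by right; exists n => //; right.
- by move=> F _ _; exact: series0.
- move=> A NA AC; split => //.
  have [oK _ ndK] := regU_spec hT (NM A NA).
  have ndA : nowhere_dense A by apply/(meagerE hT).
  have K0 : regU A = set0.
    apply: (open_nd0 oK); apply: nd_sub (nd_setU hT ndA ndK).
    move=> x Kx; case: (pselect (A x)) => Ax; first by left.
    by right; right.
  by rewrite K0 setI0 (nu0 hnu).
- move=> m Mm mC H.
  have [h _] := H m Mm (@subset_refl _ m).
  have [oK _ ndK] := regU_spec hT Mm.
  have E : C `&` regU m = set0.
    case: (pselect ((C `&` regU m) !=set0)) => [ne|e].
      have := pos _ (openI oC oK) (fun x hx => proj1 hx) ne.
      by rewrite h ltxx.
    by apply/seteqP; split=> // x hx; apply: e; exists x.
  apply/(meagerE hT); apply: nd_sub ndK => x mx.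
  left; split => // Kx.
  have hx : (C `&` regU m) x by split; [exact: mC|].
  by rewrite E in hx.
Qed.

End Hyper6.

Section Hyper7.
Context {R : realType} {T : topologicalType} (hT : hyperstonean R T).

Lemma TM_SL : strictly_localizable R (TM_M T) (TM_N T).
Proof.
have [Fam [[PF1 PF2] dense]] := exists_maxfam hT.
set P0 := ~` \bigcup_(C in Fam) C.
have oUF : open (\bigcup_(C in Fam) C).
  by apply: bigcup_open => C FC; case: (PF1 C FC).
have cP0 : closed P0 by exact: open_closedC.
have ndP0 : nowhere_dense P0.
  rewrite /nowhere_dense -(closure_id P0).1 //; apply/seteqP; split=> // y Iy.
  have [C [FC [z [Cz Iz]]]] := dense _ (@open_interior _ P0) (ex_intro _ y Iy).
  by have := interior_subset Iz; apply; exists C.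
have glue : forall B : set T -> set T,
    (forall C, Fam C -> B C `<=` C /\ nowhere_dense (B C)) ->
    nowhere_dense (\bigcup_(C in Fam) B C).
  move=> B hB; apply/seteqP; split=> // y Iy.
  set O := (closure (\bigcup_(C in Fam) B C))° in Iy.
  have oO : open O by exact: open_interior.
  have [C [FC [z [Cz Oz]]]] := dense O oO (ex_intro _ y Iy).
  have [oC _ _ _] := PF1 C FC.
  have sub : C `&` O `<=` closure (B C).
    move=> w [Cw Ow] N NN.
    have NCO : nbhs w (N `&` (C `&` O)).
      by apply: filterI NN (open_nbhs_nbhs (conj (openI oC oO) (conj Cw Ow))).
    have [u [[C' FC' BC'u] [Nu [Cu Ou]]]] := interior_subset Ow _ NCO.
    have eC : C' = C.
      apply: contrapT => ne; have := PF2 C' C FC' FC ne => e.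
      have C'u := (hB C' FC').1 u BC'u.
      have hu : (C' `&` C) u by [].
      by rewrite e in hu.
    by rewrite eC in BC'u; exists u.
  have := open_sub_interior (openI oC oO) sub; rewrite (hB C FC).2 => h.
  exact: (h z (conj Cz Oz)).
pose I := option {C : set T | Fam C}.
pose P : I -> set T := fun i => if i is Some s then sval s else P0.
exists I, P; split.
- split.
  + case=> [[C FC]|] /=.
      apply/(TM_MnE hT); exists C; have [oC _ _ _] := PF1 C FC; split => //.
      rewrite symdiffxx; exact: nd_set0.
    apply/(TM_MnE hT); exists set0; split; first exact: open0.
    by apply: nd_sub ndP0 => x [[]|[]].
  + case=> [[C FC]|] [[C' FC']|] //= ne.
    * case: (pselect (C = C')) => [e|ne']; last exact: PF2.
      subst C'; case: ne; congr Some; congr exist; exact: Prop_irrelevance.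
    * by apply/seteqP; split=> // x [Cx nx]; apply: nx; exists C.
    * by apply/seteqP; split=> // x [nx Cx]; apply: nx; exists C'.
- apply/seteqP; split=> // x _.
  case: (pselect (P0 x)) => [h|h]; first by exists None.
  have : (\bigcup_(C in Fam) C) x by apply: contrapT.
  by move=> [C FC Cx]; exists (Some (exist _ C FC)).
- case=> [[C FC]|] /=.
    by have [oC cC _ gC] := PF1 C FC; exact: piece_sf.
  exists (fun=> 0), (fun=> 0); split; first split.
  + by move=> F _ _; exact: series0.
  + by move=> F _ _; exact: series0.
  + by [].
  + move=> m _ mP0 _; apply/(meagerE hT); exact: nd_sub ndP0.
- move=> A; split.
    move=> MA i; apply: (TM_MI hT MA); case: i => [[C FC]|] /=.
      apply/(TM_MnE hT); exists C; have [oC _ _ _] := PF1 C FC; split => //.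
      rewrite symdiffxx; exact: nd_set0.
    apply/(TM_MnE hT); exists set0; split; first exact: open0.
    by apply: nd_sub ndP0 => x [[]|[]].
  move=> H; apply/(TM_MnE hT).
  have HC : forall C (FC : Fam C), TM_M T (A `&` C).
    by move=> C FC; exact: (H (Some (exist _ C FC))).
  exists (\bigcup_(C in Fam) (C `&` regU (A `&` C))); split.
    apply: bigcup_open => C FC; have [oC _ _ _] := PF1 C FC.
    by have [oK _ _] := regU_spec hT (HC C FC); exact: openI.
  apply: nd_sub (nd_setU hT ndP0
    (glue (fun C => C `&` symdiff (A `&` C) (regU (A `&` C))) _)).
    move=> x [[Ax nU]|[[C FC [Cx Kx]] nA]].
      case: (pselect (P0 x)) => [h|h]; first by left.
      have : (\bigcup_(C in Fam) C) x by apply: contrapT.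
      move=> [C FC Cx]; right; exists C => //; split => //; left; split => //.
      by move=> Kx; apply: nU; exists C.
    right; exists C => //; split => //; right; split => //.
    by move=> [].
  move=> C FC; split; first by move=> x [].
  by have [_ _ nd] := regU_spec hT (HC C FC); apply: nd_sub nd => x [].
- move=> A; split.
    move=> nA i; have {}nA : nowhere_dense A by apply/(meagerE hT).
    by apply/(meagerE hT); apply: nd_sub nA => x [].
  move=> H; apply/(meagerE hT).
  apply: nd_sub (nd_setU hT ndP0 (glue (fun C => A `&` C) _)).
    move=> x Ax; case: (pselect (P0 x)) => [h|h]; first by left.
    have : (\bigcup_(C in Fam) C) x by apply: contrapT.
    by move=> [C FC Cx]; right; exists C.
  move=> C FC; split; first by move=> x [].
  by apply/(meagerE hT); exact: (H (Some (exist _ C FC))).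
Qed.

End Hyper7.

Theorem mainTheorem7 (R : realType) :
  (forall S : topologicalType, hyperstonean R S ->
     compact_strictly_localizable_EMS R (TM_M S) (TM_N S)) /\
  (forall (S S' : topologicalType) (f : S -> S'),
     hyperstonean R S -> hyperstonean R S' ->
     continuous f -> open_map f ->
     (forall m, TM_M S' m -> TM_M S (f @^-1` m)) /\
     (forall n, TM_N S' n -> TM_N S (f @^-1` n))).
Proof.
split.
  move=> S hS; split; [exact: TM_EMS hS|exact: TM_compact hS|exact: TM_SL hS].
by move=> S S' f _ _ fc fo; exact: functor_part fc fo.
Qed.
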